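(* Let $n,t,k$ be positive integers with $2\leq k\leq n-2$, $1\leq t\leq\frac{n-k-4}{2}$ and $n\equiv k\pmod 2$. Then for every integer $s$ with $t+1\leq s\leq\frac{n-k-2}{2}$ and every $\alpha\in[0,\frac12]$, $$\rho_{\alpha}\big(K_{s}\vee(K_{n+1-2s-k}\cup\overline{K_{s+k-1}})\big)<\max\Big\{\rho_{\alpha}\big(K_{t}\vee(K_{n+1-2t-k}\cup\overline{K_{t+k-1}})\big),\ \rho_{\alpha}\big(K_{\frac{n-k}{2}}\vee\overline{K_{\frac{n+k}{2}}}\big)\Big\}.$$
   Context: For a graph $G$ with adjacency matrix $A(G)$ and diagonal degree matrix $D(G)$, and $\alpha\in[0,1]$, $A_{\alpha}(G)=\alpha D(G)+(1-\alpha)A(G)$ and $\rho_{\alpha}(G)$ is the largest eigenvalue of $A_{\alpha}(G)$. $K_m$ is the complete graph on $m$ vertices, $\overline{K_m}$ the edgeless graph on $m$ vertices, $\cup$ denotes disjoint union and $G_1\vee G_2$ the join (disjoint union plus all edges between $V(G_1)$ and $V(G_2)$). *)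

(* Defs.v *)
From HB Require Import structures.
From mathcomp Require Import all_boot all_order all_algebra.
From mathcomp Require Import reals.
Set Implicit Arguments. Unset Strict Implicit. Unset Printing Implicit Defensive.
Import Order.TTheory GRing.Theory Num.Theory.
Local Open Scope ring_scope.

(* A (simple) graph is an irreflexive symmetric relation on a finite vertex type. *)

Definition Kc (m : nat) : rel 'I_m := fun i j => i != j.
Definition Ke (m : nat) : rel 'I_m := fun _ _ => false.

Definition gunion (T U : finType) (e : rel T) (f : rel U) : rel (T + U)%type :=
  fun x y => match x, y with
             | inl a, inl b => e a b
             | inr a, inr b => f a b
             | _, _ => false
             end.

Definition gjoin (T U : finType) (e : rel T) (f : rel U) : rel (T + U)%type :=
  fun x y => match x, y with
             | inl a, inl b => e a b
             | inr a, inr b => f a b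
             | _, _ => true
             end.

Definition gdeg (T : finType) (e : rel T) (x : T) : nat := #|[set y | e x y]|.

(* A_alpha(G) = alpha D(G) + (1 - alpha) A(G), vertices numbered via enum_val *)
Definition Aalpha (R : pzRingType) (T : finType) (e : rel T) (alpha : R)
  : 'M[R]_#|T| :=
  \matrix_(i, j)
    (alpha * (if i == j then (gdeg e (enum_val i))%:R else 0)
     + (1 - alpha) * (e (enum_val i) (enum_val j))%:R).

Definition is_largest_eigenvalue (R : numFieldType) (m : nat) (M : 'M[R]_m) (r : R)
  : Prop :=
  eigenvalue M r /\ forall l : R, eigenvalue M l -> l <= r.
Arguments Kc : clear implicits.
Arguments Ke : clear implicits.

(* Main.v *)
Require Import Defs.
From HB Require Import structures.
From mathcomp Require Import all_boot all_order all_algebra.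
From mathcomp Require Import reals.
From mathcomp Require Import ring lra zify.
Import Order.TTheory GRing.Theory Num.Theory.
Local Open Scope ring_scope.
Set Implicit Arguments. Unset Strict Implicit. Unset Printing Implicit Defensive.
Lemma col_Aalpha (R : comPzRingType) (T : finType) (e : rel T) (al : R) (f : T -> R) (v : T) :
 ((\row_i f (enum_val i)) *m Aalpha e al) 0 (enum_rank v) =
   al * (gdeg e v)%:R * f v + (1 - al) * \sum_u f u * (e u v)%:R.
Proof.
rewrite !mxE.
under eq_bigr do rewrite !mxE enum_rankK mulrDr.
rewrite big_split /=.
rewrite (bigD1 (enum_rank v)) //= eqxx enum_rankK big1 ?addr0; last first.
  by move=> i /negbTE ->; rewrite !mulr0.
congr (_ + _); first by ring.
rewrite mulr_sumr.
rewrite [RHS](big_enum_val (A := xpredT)) /=.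
apply: eq_bigr => i _; ring.
Qed.
Lemma deg_sum (R : pzSemiRingType) (T : finType) (e : rel T) (v : T) :
  ((gdeg e v)%:R : R) = \sum_u ((e v u)%:R : R).
Proof.
rewrite /gdeg -sum1_card -natr_sum big_mkcond /=.
by apply: congr1; apply: eq_bigr => u _; rewrite inE; case: (e v u).
Qed.

Lemma sum_neq (R : pzSemiRingType) (a : nat) (i : 'I_a) :
  \sum_(j : 'I_a) (((j != i) : nat)%:R : R) = (a.-1)%:R.
Proof.
rewrite (bigD1 i) //= eqxx add0r.
rewrite (eq_bigr (fun _ => 1)); last by move=> j /negbTE ->.
rewrite sumr_const; congr (_%:R).
have := cardC1 i; rewrite card_ord => ->.
by [].
Qed.

Lemma sum_neq' (R : pzSemiRingType) (a : nat) (i : 'I_a) :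
  \sum_(j : 'I_a) (((i != j) : nat)%:R : R) = (a.-1)%:R.
Proof. by rewrite -(sum_neq R i); apply: eq_bigr => j _; rewrite eq_sym. Qed.

Definition G3 a b c := gjoin (Kc a) (gunion (Kc b) (Ke c)).
Arguments G3 : clear implicits.
Definition f3 (R : Type) a b c (yA yB yC : R) (u : ('I_a + ('I_b + 'I_c))%type) : R :=
  match u with inl _ => yA | inr (inl _) => yB | inr (inr _) => yC end.

Section Cols.
Variables (R : comPzRingType) (a b c : nat) (al yA yB yC : R).
Let M := Aalpha (G3 a b c) al.
Let T : finType := ('I_a + ('I_b + 'I_c))%type.
Let y : 'rV[R]_#|T| := \row_i f3 yA yB yC (enum_val i).

Lemma col3A i : (y *m M) 0 (enum_rank (inl i)) =
  al * (a.-1 + b + c)%:R * yA + (1 - al) * ((a.-1)%:R * yA + b%:R * yB + c%:R * yC).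
Proof.
rewrite col_Aalpha deg_sum !big_sumType /= /Kc.
rewrite -!mulr_sumr sum_neq sum_neq' !sumr_const !card_ord.
rewrite !natrD; ring.
Qed.

Lemma col3B i : (y *m M) 0 (enum_rank (inr (inl i))) =
  al * (a + b.-1)%:R * yB + (1 - al) * (a%:R * yA + (b.-1)%:R * yB).
Proof.
rewrite col_Aalpha deg_sum !big_sumType /= /Kc /Ke.
rewrite -!mulr_sumr sum_neq sum_neq' !sumr_const !card_ord.
rewrite !natrD; ring.
Qed.

Lemma col3C i : (y *m M) 0 (enum_rank (inr (inr i))) =
  al * a%:R * yC + (1 - al) * (a%:R * yA).
Proof.
rewrite col_Aalpha deg_sum !big_sumType /= /Kc /Ke.
rewrite -!mulr_sumr !sumr_const !card_ord.
ring.
Qed.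
End Cols.

Definition G2 a c := gjoin (Kc a) (Ke c).
Arguments G2 : clear implicits.
Definition f2 (R : Type) a c (yA yC : R) (u : ('I_a + 'I_c)%type) : R :=
  match u with inl _ => yA | inr _ => yC end.

Section Cols2.
Variables (R : comPzRingType) (a c : nat) (al yA yC : R).
Let M := Aalpha (G2 a c) al.
Let T : finType := ('I_a + 'I_c)%type.
Let y : 'rV[R]_#|T| := \row_i f2 yA yC (enum_val i).

Lemma col2A i : (y *m M) 0 (enum_rank (inl i)) =
  al * (a.-1 + c)%:R * yA + (1 - al) * ((a.-1)%:R * yA + c%:R * yC).
Proof.
rewrite col_Aalpha deg_sum !big_sumType /= /Kc /Ke.
rewrite -!mulr_sumr sum_neq sum_neq' !sumr_const !card_ord.
rewrite !natrD; ring.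
Qed.

Lemma col2C i : (y *m M) 0 (enum_rank (inr i)) =
  al * a%:R * yC + (1 - al) * (a%:R * yA).
Proof.
rewrite col_Aalpha deg_sum !big_sumType /= /Kc /Ke.
rewrite -!mulr_sumr !sumr_const !card_ord.
ring.
Qed.
End Cols2.
Lemma cw (R : realFieldType) (m : nat) (M : 'M[R]_m) (y : 'rV[R]_m) (x l : R) :
 (forall i j, 0 <= M i j) -> (forall j, 0 < y 0 j) ->
 (forall j, (y *m M) 0 j < x * y 0 j) -> eigenvalue M l -> l < x.
Proof.
move=> M0 y0 hy /eigenvalueP [v hv vn0].
have [j1 hj1] : exists j, v 0 j != 0.
  apply/existsP; apply: contraNT vn0; rewrite negb_exists => /forallP H.
  apply/eqP/rowP => j; rewrite mxE; have := H j; rewrite negbK => /eqP ->.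
  by [].
pose F j := `|v 0 j| / y 0 j.
case: (@arg_maxP _ _ _ j1 xpredT F) => // j _ Hj.
set c := F j.
have Fpos : 0 < F j1 by rewrite /F divr_gt0 // normr_gt0.
have cpos : 0 < c by apply: lt_le_trans Fpos (Hj _ _).
have hvj : `|v 0 j| = c * y 0 j by rewrite /c /F mulrVK // unitfE gt_eqF.
have key : `|l| * `|v 0 j| <= c * (y *m M) 0 j.
  rewrite -normrM.
  have -> : l * v 0 j = (v *m M) 0 j by rewrite hv !mxE.
  rewrite !mxE mulr_sumr; apply: le_trans (ler_norm_sum _ _ _) _.
  apply: ler_sum => i _; rewrite normrM (ger0_norm (M0 _ _)) mulrA.
  apply: ler_wpM2r; first exact: M0.
  by move: (Hj i isT); rewrite -/c /F => H; rewrite -ler_pdivrMr.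
have : `|l| * (c * y 0 j) < x * (c * y 0 j).
  rewrite -hvj; apply: le_lt_trans key _.
  have -> : x * `|v 0 j| = c * (x * y 0 j) by rewrite hvj mulrCA.
  by rewrite ltr_pM2l // hy.
have hz : 0 < c * y 0 j by rewrite mulr_gt0.
rewrite (ltr_pM2r hz) => H.
exact: le_lt_trans (ler_norm _) H.
Qed.

Lemma Aalpha_ge0 (R : realFieldType) (T : finType) (e : rel T) (al : R) :
  0 <= al <= 1 -> forall i j, 0 <= Aalpha e al i j.
Proof.
move=> /andP [h0 h1] i j; rewrite mxE.
apply: addr_ge0; apply: mulr_ge0 => //; last by rewrite subr_ge0.
by case: (i == j).
Qed.

Lemma predR (R : pzRingType) (a : nat) : (0 < a)%N -> ((a.-1)%:R : R) = a%:R - 1.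
Proof. by move=> ha; rewrite -{2}(prednK ha) -addn1 natrD addrK. Qed.

Section G3lemmas.
Variables (R : realFieldType) (a b c : nat) (al x yB yC : R).
Hypotheses (ha : (0 < a)%N) (hb : (0 < b)%N).
Let A : R := a%:R. Let B : R := b%:R. Let C : R := c%:R.
Let p := al * (A + B + C - 1) + (1 - al) * (A - 1).
Let q := al * (A + B - 1) + (1 - al) * (B - 1).
Let r := al * A.
Let T : finType := ('I_a + ('I_b + 'I_c))%type.
Let y : 'rV[R]_#|T| := \row_i f3 1 yB yC (enum_val i).

Lemma y3_cols (P : R -> R -> Prop) :
  P (p + (1 - al) * (B * yB + C * yC)) x ->
  P (q * yB + (1 - al) * A) (x * yB) ->
  P (r * yC + (1 - al) * A) (x * yC) ->
  forall j, P ((y *m Aalpha (G3 a b c) al) 0 j) (x * y 0 j).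
Proof.
move=> hA hB hC j; rewrite -(enum_valK j); move: (enum_val j) => v.
rewrite [y 0 _]mxE enum_rankK.
case: v => [i|[i|i]] /=.
- rewrite col3A !natrD !predR // mulr1.
  by move: hA; rewrite /p /A /B /C; congr P; ring.
- rewrite col3B !natrD !predR //.
  by move: hB; rewrite /q /A /B /C; congr P; ring.
- rewrite col3C.
  by move: hC; rewrite /r /A; congr P; ring.
Qed.

Lemma G3_eig :
  p + (1 - al) * (B * yB + C * yC) = x ->
  q * yB + (1 - al) * A = x * yB ->
  r * yC + (1 - al) * A = x * yC ->
  eigenvalue (Aalpha (G3 a b c) al) x.
Proof.
move=> hA hB hC; apply/eigenvalueP; exists y.
  apply/rowP => j; rewrite [RHS]mxE.
  exact: (@y3_cols (fun u v => u = v)).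
apply/eqP => /rowP /(_ (enum_rank (inl (Ordinal ha) : T))).
by rewrite !mxE enum_rankK /= => /eqP; rewrite oner_eq0.
Qed.

Lemma G3_lt l :
  0 <= al <= 1 -> 0 < yB -> 0 < yC ->
  p + (1 - al) * (B * yB + C * yC) < x ->
  q * yB + (1 - al) * A < x * yB ->
  r * yC + (1 - al) * A < x * yC ->
  eigenvalue (Aalpha (G3 a b c) al) l -> l < x.
Proof.
move=> hal hyB hyC hA hB hC; apply: (cw (y := y)).
- exact: Aalpha_ge0.
- move=> j; rewrite mxE; case: (enum_val j) => [i|[i|i]] //=.
- exact: (@y3_cols (fun u v => u < v)).
Qed.
End G3lemmas.

Section G2lemmas.
Variables (R : realFieldType) (a c : nat) (al x yC : R).
Hypotheses (ha : (0 < a)%N).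
Let A : R := a%:R. Let C : R := c%:R.
Let T : finType := ('I_a + 'I_c)%type.
Let y : 'rV[R]_#|T| := \row_i f2 1 yC (enum_val i).

Lemma G2_eig :
  al * (A + C - 1) + (1 - al) * (A - 1) + (1 - al) * (C * yC) = x ->
  al * A * yC + (1 - al) * A = x * yC ->
  eigenvalue (Aalpha (G2 a c) al) x.
Proof.
move=> hA hC; apply/eigenvalueP; exists y.
  apply/rowP => j; rewrite [RHS]mxE -(enum_valK j); move: (enum_val j) => v.
  rewrite [y 0 _]mxE enum_rankK.
  case: v => [i|i] /=.
  - rewrite col2A !natrD !predR // mulr1.
    by rewrite -hA /A /C; ring.
  - rewrite col2C.
    by rewrite -hC /A; ring.
apply/eqP => /rowP /(_ (enum_rank (inl (Ordinal ha) : T))).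
by rewrite !mxE enum_rankK /= => /eqP; rewrite oner_eq0.
Qed.
End G2lemmas.
Section Real.
Variable R : realType.
Implicit Types (al K M s x : R).
Definition pp al K M s : R := al * (2 * M + K - 1) + (1 - al) * (s - 1).
Definition qq al M s : R := al * (2 * M - s) + (1 - al) * (2 * M - 2 * s).
Definition rr al s : R := al * s.
Definition Phi al K M s x : R :=
  (x - pp al K M s) * (x - qq al M s) * (x - rr al s)
  - (1 - al) ^+ 2 * s * ((2 * M + 1 - 2 * s) * (x - rr al s) + (s + K - 1) * (x - qq al M s)).
Definition p2 al K M : R := al * (2 * M + K - 1) + (1 - al) * (M - 1).
Definition Psi al K M x : R := (x - p2 al K M) * (x - al * M) - (1 - al) ^+ 2 * M * (M + K).

Lemma root_Phi al K M T : 0 <= al <= 1/2 -> 2 <= K -> 1 <= T -> T + 2 <= M ->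
  exists2 l, qq al M T < l & Phi al K M T l = 0.
Proof.
move=> /andP [a0 a1] hK hT hM.
set p := pp al K M T; set q := qq al M T; set r := rr al T.
set w1 := (1 - al) ^+ 2 * T * (2 * M + 1 - 2 * T).
set w2 := (1 - al) ^+ 2 * T * (T + K - 1).
pose P : {poly R} := ('X - p%:P) * ('X - q%:P) * ('X - r%:P) - w1%:P * ('X - r%:P) - w2%:P * ('X - q%:P).
have HP y : P.[y] = Phi al K M T y.
  by rewrite /P !hornerE /Phi -/p -/q -/r /w1 /w2; ring.
have hp : 0 <= p by rewrite /p /pp; nra.
have hr : 0 <= r by rewrite /r /rr; nra.
have hqr : r < q by rewrite /q /r /qq /rr; nra.
have hw1 : 0 < w1 by rewrite /w1; apply: mulr_gt0; [apply: mulr_gt0|]; nra.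
have hw2 : 0 <= w2 by rewrite /w2; apply: mulr_ge0; [apply: mulr_ge0|]; nra.
set U := p + q + r + (w1 + w2) + 1.
have hUq : 1 <= U - q by rewrite /U; lra.
have hUr : 1 <= U - r by rewrite /U; lra.
have hUp : w1 + w2 + 1 <= U - p by rewrite /U; lra.
have hPq : P.[q] < 0.
  rewrite HP /Phi -/p -/q -/r.
  have -> : (q - p) * (q - q) * (q - r) -
    (1 - al) ^+ 2 * T * ((2 * M + 1 - 2 * T) * (q - r) + (T + K - 1) * (q - q))
    = - (w1 * (q - r)) by rewrite /w1; ring.
  by rewrite oppr_lt0 mulr_gt0 // subr_gt0.
have hPU : 0 <= P.[U].
  rewrite HP /Phi -/p -/q -/r.
  have e : (1 - al) ^+ 2 * T * ((2 * M + 1 - 2 * T) * (U - r) + (T + K - 1) * (U - q))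
     = w1 * (U - r) + w2 * (U - q) by rewrite /w1 /w2; ring.
  rewrite e subr_ge0.
  have hX : U - r <= (U - q) * (U - r) by nra.
  have hY : U - q <= (U - q) * (U - r) by nra.
  have h1 : w1 * (U - r) <= w1 * ((U - q) * (U - r)) by apply: ler_wpM2l; [exact: ltW|].
  have h2 : w2 * (U - q) <= w2 * ((U - q) * (U - r)) by apply: ler_wpM2l.
  have h3 : (w1 + w2) * ((U - q) * (U - r)) <= (U - p) * ((U - q) * (U - r)).
    by apply: ler_wpM2r; [nra| lra].
  rewrite -mulrA; apply: le_trans h3; lra.
have qU : q <= U by lra.
have [l /andP [l1 l2] /eqP rl] : exists2 l, q <= l <= U & root P l.
  by apply: poly_ivt => //; rewrite (ltW hPq) hPU.
exists l; last by rewrite -HP.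
rewrite lt_neqAle l1 andbT; apply/eqP => ql; move: hPq; rewrite ql rl; lra.
Qed.

Lemma root_Psi al K M : 0 <= al <= 1/2 -> 0 <= K -> 1 <= M ->
  exists2 l, p2 al K M < l & Psi al K M l = 0.
Proof.
move=> /andP [a0 a1] hK hM.
set p := p2 al K M; set r := al * M.
set w := (1 - al) ^+ 2 * M * (M + K).
pose P : {poly R} := ('X - p%:P) * ('X - r%:P) - w%:P.
have HP y : P.[y] = Psi al K M y by rewrite /P !hornerE /Psi -/p -/r /w.
have hrp : r <= p by rewrite /r /p /p2; nra.
have hw : 0 < w by rewrite /w; apply: mulr_gt0; [apply: mulr_gt0|]; nra.
set U := p + w + 1.
have hPp : P.[p] < 0 by rewrite HP /Psi -/p -/r subrr mul0r sub0r oppr_lt0.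
have hPU : 0 <= P.[U].
  rewrite HP /Psi -/p -/r -/w.
  have : 1 <= U - r by rewrite /U; lra.
  rewrite /U; nra.
have pU : p <= U by rewrite /U; lra.
have [l /andP [l1 l2] /eqP rl] : exists2 l, p <= l <= U & root P l.
  by apply: poly_ivt => //; rewrite (ltW hPp) hPU.
exists l; last by rewrite -HP.
rewrite lt_neqAle l1 andbT; apply/eqP => pl; move: hPp; rewrite pl rl; lra.
Qed.

Lemma Phi_mono al K M T l x : 0 <= al <= 1 -> 0 <= T -> T <= M -> 1 <= K ->
  qq al M T < l -> rr al T <= qq al M T -> Phi al K M T l = 0 -> l <= x ->
  0 <= Phi al K M T x.
Proof.
move=> /andP [a0 a1] hT hTM hK hl hrq h0 hx.
set u0 := l - qq al M T; set v0 := l - rr al T; set d := x - l.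
have hu0 : 0 < u0 by rewrite /u0; lra.
have hv0 : 0 < v0 by rewrite /v0; lra.
have hd : 0 <= d by rewrite /d; lra.
set w1 := (1 - al) ^+ 2 * T * (2 * M + 1 - 2 * T).
set w2 := (1 - al) ^+ 2 * T * (T + K - 1).
have hw1 : 0 <= w1 by rewrite /w1; apply: mulr_ge0; [apply: mulr_ge0|]; nra.
have hw2 : 0 <= w2 by rewrite /w2; apply: mulr_ge0; [apply: mulr_ge0|]; nra.
have id : u0 * v0 * Phi al K M T x =
   (u0 + d) * (v0 + d) * Phi al K M T l +
   d * ((u0 + d) * (v0 + d) * u0 * v0 + w1 * (v0 + d) * v0 + w2 * (u0 + d) * u0).
  by rewrite /Phi /u0 /v0 /d /w1 /w2; ring.
rewrite h0 mulr0 add0r in id.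
have : 0 <= u0 * v0 * Phi al K M T x.
  rewrite id; apply: mulr_ge0 => //.
  apply: addr_ge0; [apply: addr_ge0|]; apply: mulr_ge0 => //;
   try apply: mulr_ge0 => //; try apply: mulr_ge0 => //; lra.
by rewrite pmulr_rge0 // mulr_gt0.
Qed.

Lemma core al K M T S l2 l3 x : 0 <= al <= 1/2 -> 2 <= K -> 1 <= T -> T + 1 <= S -> S + 1 <= M ->
  qq al M T < l2 -> Phi al K M T l2 = 0 -> p2 al K M < l3 -> Psi al K M l3 = 0 ->
  l2 <= x -> l3 <= x ->
  [/\ 0 < Phi al K M S x, qq al M S < x & rr al S < x].
Proof.
move=> /andP [a0 a1] hK hT hTS hSM hl2 hP2 hl3 hP3 hx2 hx3.
have hrq : rr al T <= qq al M T by rewrite /rr /qq; nra.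
have hPt : 0 <= Phi al K M T x.
  by apply: (Phi_mono (l := l2)) => //; [rewrite a0; lra | lra | lra | lra].
have hrM : al * M <= p2 al K M by rewrite /p2; nra.
have hPsi : 0 <= Psi al K M x.
  have -> : Psi al K M x = Psi al K M l3 + (x - l3) * (x + l3 - p2 al K M - al * M)
    by rewrite /Psi; ring.
  rewrite hP3 add0r; apply: mulr_ge0; lra.
have hPm : 0 <= Phi al K M M x.
  have -> : Phi al K M M x = (x - al * M) * Psi al K M x by rewrite /Phi /Psi /pp /qq /rr /p2; ring.
  apply: mulr_ge0 => //; lra.
set c3 := - ((2 - 3 * al) * (1 - al)).
set K2 := 2 * M * (1 - 2 * al + 2 * al ^+ 2) + K * (-2 + 5 * al - 2 * al ^+ 2) + 3 * al ^+ 2 - 6 * al + 2.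
have key : (M - T) * Phi al K M S x = (M - S) * Phi al K M T x + (S - T) * Phi al K M M x
   + (M - T) * (S - T) * (S - M) * (c3 * (S + T + M) - x + K2).
  by rewrite /Phi /pp /qq /rr /c3 /K2; ring.
have hc3 : c3 <= 0 by rewrite /c3 oppr_le0; apply: mulr_ge0; lra.
have hK2 : p2 al K M - K2 - c3 * (M + 3) = (1 - al ^+ 2) * M + 2 * (1 - al) ^+ 2 * K + 3 * (1 - 2 * al) * (1 - al).
  by rewrite /p2 /K2 /c3; ring.
have hK2' : 0 <= p2 al K M - K2 - c3 * (M + 3).
  rewrite hK2; apply: addr_ge0; [apply: addr_ge0|]; apply: mulr_ge0; try apply: mulr_ge0; try nra.
have hc3b : c3 * (S + T + M) <= c3 * (M + 3) by apply: ler_wnM2l => //; lra.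
have hneg : c3 * (S + T + M) - x + K2 < 0 by lra.
have hpos : 0 < (M - T) * (S - T) * (M - S) by apply: mulr_gt0; [apply: mulr_gt0|]; lra.
have hlast : 0 < (M - T) * (S - T) * (S - M) * (c3 * (S + T + M) - x + K2).
  have -> : (M - T) * (S - T) * (S - M) * (c3 * (S + T + M) - x + K2)
    = ((M - T) * (S - T) * (M - S)) * (- (c3 * (S + T + M) - x + K2)) by ring.
  by apply: mulr_gt0 => //; rewrite oppr_gt0.
split.
- have : 0 < (M - T) * Phi al K M S x.
    rewrite key; apply: lt_le_trans hlast _.
    rewrite -addrA lerDr; apply: addr_ge0; apply: mulr_ge0 => //; lra.
  by rewrite pmulr_rgt0 // subr_gt0; lra.
- have : qq al M S <= qq al M T by rewrite /qq; nra.
  lra.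
- have : rr al S <= al * M by rewrite /rr; nra.
  lra.
Qed.
End Real.

Lemma eig_from_Phi (R : realType) (a b c : nat) (al K M S x : R) :
  (0 < a)%N -> (0 < b)%N -> a%:R = S -> b%:R = 2 * M + 1 - 2 * S -> c%:R = S + K - 1 ->
  qq al M S < x -> rr al S < x -> Phi al K M S x = 0 ->
  eigenvalue (Aalpha (G3 a b c) al) x.
Proof.
move=> ha hb hA hB hC hq hr h0.
have u0 : x - qq al M S != 0 by rewrite subr_eq0 gt_eqF.
have v0 : x - rr al S != 0 by rewrite subr_eq0 gt_eqF.
apply: (G3_eig (yB := (1 - al) * S / (x - qq al M S)) (yC := (1 - al) * S / (x - rr al S)) ha hb);
  rewrite ?hA ?hB ?hC.
- transitivity (x - Phi al K M S x / ((x - qq al M S) * (x - rr al S))); last by rewrite h0 mul0r subr0.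
  have w0 : (x - qq al M S) * (x - rr al S) != 0 by rewrite mulf_neq0.
  move: u0 v0 w0; rewrite /Phi /pp /rr /qq => u0 v0 w0; field.
  by rewrite u0 v0.
- have -> : al * (S + (2 * M + 1 - 2 * S) - 1) + (1 - al) * (2 * M + 1 - 2 * S - 1) = qq al M S
    by rewrite /qq; ring.
  move: (qq al M S) u0 => Q u1; field => //.
- have -> : al * S = rr al S by [].
  move: (rr al S) v0 => Q v1; field => //.
Qed.

Lemma lt_from_Phi (R : realType) (a b c : nat) (al K M S x l : R) :
  (0 < a)%N -> (0 < b)%N -> a%:R = S -> b%:R = 2 * M + 1 - 2 * S -> c%:R = S + K - 1 ->
  0 <= al <= 1 -> qq al M S < x -> rr al S < x -> 0 < Phi al K M S x ->
  eigenvalue (Aalpha (G3 a b c) al) l -> l < x.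
Proof.
move=> ha hb hA hB hC hal hq hr h0.
have hS : 0 <= S by rewrite -hA ler0n.
have hB0 : 0 <= 2 * M + 1 - 2 * S by rewrite -hB ler0n.
have hC0 : 0 <= S + K - 1 by rewrite -hC ler0n.
have hbeta : 0 <= 1 - al by move: hal => /andP [_ h]; rewrite subr_ge0.
set u := x - qq al M S. set v := x - rr al S.
have hu : 0 < u by rewrite /u subr_gt0.
have hv : 0 < v by rewrite /v subr_gt0.
set D := Phi al K M S x / (u * v).
have hD : 0 < D by rewrite /D divr_gt0 // mulr_gt0.
set Sg := (2 * M + 1 - 2 * S) / u + (S + K - 1) / v.
have hSg : 0 <= Sg by rewrite /Sg addr_ge0 // divr_ge0 // ltW.
set eta := D / ((1 - al) * Sg + 1).
have hden : 0 < (1 - al) * Sg + 1 by apply: ltr_pwDr => //; apply: mulr_ge0.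
have heta : 0 < eta by rewrite /eta divr_gt0.
have hbS : 0 <= (1 - al) * S by apply: mulr_ge0.
apply: (G3_lt (yB := ((1 - al) * S + eta) / u) (yC := ((1 - al) * S + eta) / v) ha hb hal);
  rewrite ?hA ?hB ?hC.
- by rewrite divr_gt0 // ltr_pwDr.
- by rewrite divr_gt0 // ltr_pwDr.
- have e : al * (S + (2 * M + 1 - 2 * S) + (S + K - 1) - 1) + (1 - al) * (S - 1) +
    (1 - al) * ((2 * M + 1 - 2 * S) * (((1 - al) * S + eta) / u) +
    (S + K - 1) * (((1 - al) * S + eta) / v)) = x - D + (1 - al) * eta * Sg.
    rewrite /D /Sg /u /v /Phi /pp /qq /rr.
    have u0 : x - qq al M S != 0 by rewrite gt_eqF.
    have v0 : x - rr al S != 0 by rewrite gt_eqF.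
    move: u0 v0; rewrite /qq /rr => u0 v0; field.
    by rewrite u0 v0.
  rewrite e.
  have : (1 - al) * eta * Sg < D.
    have dn : (1 - al) * Sg + 1 != 0 by rewrite gt_eqF.
    have -> : (1 - al) * eta * Sg = D * ((1 - al) * Sg / ((1 - al) * Sg + 1)).
      by rewrite /eta; field.
    rewrite gtr_pMr // ltr_pdivrMr // mul1r; lra.
  lra.
- have -> : al * (S + (2 * M + 1 - 2 * S) - 1) + (1 - al) * (2 * M + 1 - 2 * S - 1) = qq al M S
    by rewrite /qq; ring.
  rewrite -/u.
  have -> : qq al M S = x - u by rewrite /u; ring.
  have u0 : u != 0 by rewrite gt_eqF.
  have -> : (x - u) * (((1 - al) * S + eta) / u) + (1 - al) * S
     = x * (((1 - al) * S + eta) / u) - eta by field.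
  by rewrite ltrBlDr ltrDl.
- have -> : al * S = x - v by rewrite /v /rr; ring.
  have v0 : v != 0 by rewrite gt_eqF.
  have -> : (x - v) * (((1 - al) * S + eta) / v) + (1 - al) * S
     = x * (((1 - al) * S + eta) / v) - eta by field.
  by rewrite ltrBlDr ltrDl.
Qed.

Lemma eig_from_Psi (R : realType) (a c : nat) (al K M x : R) :
  (0 < a)%N -> a%:R = M -> c%:R = M + K ->
  al * M < x -> Psi al K M x = 0 ->
  eigenvalue (Aalpha (G2 a c) al) x.
Proof.
move=> ha hA hC hr h0.
have v0 : x - al * M != 0 by rewrite subr_eq0 gt_eqF.
apply: (G2_eig (yC := (1 - al) * M / (x - al * M)) ha); rewrite ?hA ?hC.
- transitivity (x - Psi al K M x / (x - al * M)); last by rewrite h0 mul0r subr0.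
  rewrite /Psi /p2; move: (al * M) v0 => Q v1; field => //.
- move: (al * M) v0 => Q v1; field => //.
Qed.

Unset Implicit Arguments.

Theorem lemma3p2 (R : realType) (n t k : nat) :
  (0 < t)%N -> (2 <= k)%N -> (k <= n - 2)%N -> (2 * t <= n - k - 4)%N ->
  n = k %[mod 2] ->
  forall (s : nat) (alpha : R),
    (t + 1 <= s)%N -> (2 * s <= n - k - 2)%N ->
    0 <= alpha -> alpha <= 1 / 2 ->
    forall r1 r2 r3 : R,
      is_largest_eigenvalue
        (Aalpha (gjoin (Kc s) (gunion (Kc (n + 1 - 2 * s - k)) (Ke (s + k - 1)))) alpha) r1 ->
      is_largest_eigenvalue
        (Aalpha (gjoin (Kc t) (gunion (Kc (n + 1 - 2 * t - k)) (Ke (t + k - 1)))) alpha) r2 ->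
      is_largest_eigenvalue
        (Aalpha (gjoin (Kc ((n - k) %/ 2)) (Ke ((n + k) %/ 2))) alpha) r3 ->
      r1 < Num.max r2 r3.
Proof.
move=> ht hk hkn htn hmod s al hts hsn a0 a1 r1 r2 r3 [ev1 _] [_ mx2] [_ mx3].
set m := ((n - k) %/ 2)%N.
have hnm : n = (k + 2 * m)%N by rewrite /m; move: hmod; rewrite /=; lia.
have hnk : ((n + k) %/ 2 = m + k)%N.
  by rewrite /m; move: hmod; rewrite /=; lia.
have hs0 : (0 < s)%N by lia.
have hbs : (0 < n + 1 - 2 * s - k)%N by lia.
have hsm : (s <= m - 1)%N by lia.
have hbt : (0 < n + 1 - 2 * t - k)%N by lia.
have htm : (t <= m - 1)%N by lia.
have hm0 : (0 < (n - k) %/ 2)%N by lia.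
set M : R := m%:R. set K : R := k%:R. set T : R := t%:R. set S : R := s%:R.
have castR (u v : nat) : (u = v)%N -> (u%:R : R) = v%:R by move=> ->.
have eb (z : nat) : (z <= m - 1)%N -> ((n + 1 - 2 * z - k)%:R : R) = 2 * M + 1 - 2 * z%:R.
  move=> hz; have E : (n + 1 - 2 * z - k + 2 * z = 2 * m + 1)%N by lia.
  have h := castR _ _ E; rewrite natrD natrM natrD natrM in h; rewrite /M; lra.
have ec (z : nat) : (0 < z)%N -> ((z + k - 1)%:R : R) = z%:R + K - 1.
  move=> hz; have E : (z + k - 1 + 1 = z + k)%N by lia.
  have h := castR _ _ E; rewrite !natrD in h; rewrite /K; lra.
have hal : 0 <= al <= 1 / 2 by rewrite a0 a1.
have hK : 2 <= K by rewrite /K (ler_nat R 2 k).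
have hT : 1 <= T by rewrite /T (ler_nat R 1 t).
have hTS : T + 1 <= S by rewrite /S /T natr1 ler_nat; lia.
have hSM : S + 1 <= M by rewrite /S /M natr1 ler_nat; lia.
have hTM : T + 2 <= M by rewrite /T /M -natrD ler_nat; lia.
have [l2 hl2 hP2] := root_Phi hal hK hT hTM.
have hM1 : 1 <= M by lra.
have hK0 : 0 <= K by lra.
have [l3 hl3 hP3] := root_Psi hal hK0 hM1.
set x := Num.max l2 l3.
have hx2 : l2 <= x by rewrite /x le_max lexx.
have hx3 : l3 <= x by rewrite /x le_max lexx orbT.
have [hpos hqx hrx] := core hal hK hT hTS hSM hl2 hP2 hl3 hP3 hx2 hx3.
have hr1 : r1 < x.
  apply: (lt_from_Phi (a := s) (b := n + 1 - 2 * s - k) (c := s + k - 1) (K := K) (M := M) (S := S)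
     hs0 hbs erefl (eb s hsm) (ec s hs0) _ hqx hrx hpos ev1).
  by rewrite a0 /=; lra.
have hl2r : l2 <= r2.
  apply: mx2; apply: (eig_from_Phi (K := K) (M := M) (S := T) ht hbt erefl (eb t htm) (ec t ht) hl2 _ hP2).
  by move: hl2; rewrite /rr /qq; nra.
have hl3r : l3 <= r3.
  apply: mx3; apply: (eig_from_Psi (K := K) (M := M) hm0 erefl _ _ hP3).
  - by rewrite hnk natrD.
  - by move: hl3; rewrite /p2; nra.
move: hr1; rewrite /x !lt_max => /orP [h|h]; apply/orP; [left|right]; lra.
Qed.
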